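(* Let $n\ge 1$, $0\le m\le n$, and fix $\chi\in\mathcal C^\infty_0(\mathbb R)$ with $0\le\chi\le1$, $\chi\equiv1$ on $[-1/2,1/2]$ and $\mathrm{supp}\,\chi\subset(-1,1)$. Let $0<\mu<1$ and $\mu'>0$. Then there exists $0<\delta_0<1$ such that the following holds. Let $0<\epsilon<1$, and let $\rho(z)=\sum_{j=1}^m(x_j^2+\mu_jy_j^2)+\sum_{j=m+1}^n(x_j^2-\mu_jy_j^2)$ on $\mathbb B^n_\epsilon\subset\mathbb C^n$ ($z_j=x_j+iy_j$), with $\mu'\le\mu_j\le1$ for $j=1,\dots,m$ and $0\le\mu_j\le\mu$ for $j=m+1,\dots,n$. Let $\delta_{m+1},\dots,\delta_n$ satisfy $0<\delta_j\le\mu_j$ and $\delta_j<\delta_0$, and set $\psi_{\epsilon,\delta}(z):=\chi(\|z\|^2/\epsilon^2)\sum_{j=m+1}^n\delta_jy_j^2$. Then $\rho_{\epsilon,\delta}:=\rho+\psi_{\epsilon,\delta}$ is strictly plurisubharmonic on $\mathbb B^n_\epsilon$, and all its critical points in $\mathbb B^n_\epsilon$ lie in $\{\rho_{\epsilon,\delta}\le0\}$.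
   Context: $\mathbb B^n_\epsilon$ is the open ball of radius $\epsilon$ about $0$ in $\mathbb C^n$. *)

(* Defs.v *)
From Stdlib Require Import Reals.
From Coquelicot Require Import Coquelicot.
Open Scope R_scope.

(* A point z of C^n, z_j = x_j + i y_j (j = 1..n), is encoded by its real
   coordinates (x, y) : (nat -> R) * (nat -> R); only indices 1..n are used. *)
Definition pt := ((nat -> R) * (nat -> R))%type.

Definition padd (p : pt) (t : R) (v : pt) : pt :=
  (fun j => fst p j + t * fst v j, fun j => snd p j + t * snd v j).

Definition Jmul (v : pt) : pt := (fun j => - snd v j, fun j => fst v j).

Definition normsq (n : nat) (p : pt) : R :=
  sum_n_m (fun j => fst p j ^ 2 + snd p j ^ 2) 1 n.

Definition ball_n (n : nat) (eps : R) (p : pt) : Prop := normsq n p < eps ^ 2.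

Definition smooth (chi : R -> R) : Prop := forall k t, ex_derive_n chi k t.

(* supp chi (closure of {chi <> 0}) is contained in (-1,1) *)
Definition supp_in_m1_1 (chi : R -> R) : Prop :=
  forall t, (forall e, 0 < e -> exists s, Rabs (s - t) < e /\ chi s <> 0) ->
            -1 < t < 1.

Definition rho (n m : nat) (mu : nat -> R) (p : pt) : R :=
  sum_n_m (fun j => fst p j ^ 2 + mu j * snd p j ^ 2) 1 m
  + sum_n_m (fun j => fst p j ^ 2 - mu j * snd p j ^ 2) (m + 1) n.

Definition psi (n m : nat) (chi : R -> R) (eps : R) (delta : nat -> R) (p : pt) : R :=
  chi (normsq n p / eps ^ 2) * sum_n_m (fun j => delta j * snd p j ^ 2) (m + 1) n.

Definition supported (n : nat) (v : pt) : Prop :=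
  forall j, (j < 1 \/ n < j)%nat -> fst v j = 0 /\ snd v j = 0.
Definition nonzero (n : nat) (v : pt) : Prop :=
  exists j, (1 <= j <= n)%nat /\ (fst v j <> 0 \/ snd v j <> 0).

Definition d2dir (f : pt -> R) (p v : pt) : R :=
  Derive_n (fun t => f (padd p t v)) 2 0.

(* Levi form (complex Hessian) sum_{j,k} d^2 f/dz_j dzbar_k (p) w_j conj(w_k),
   written via the identity  L_p(w) = (D^2 f(p)[v,v] + D^2 f(p)[iv,iv]) / 4,
   where v is the real vector of w. *)
Definition levi (f : pt -> R) (p v : pt) : R :=
  (d2dir f p v + d2dir f p (Jmul v)) / 4.

Definition strictly_psh_on (n : nat) (U : pt -> Prop) (f : pt -> R) : Prop :=
  forall p, U p -> forall v, supported n v -> nonzero n v ->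
    ex_derive_n (fun t => f (padd p t v)) 2 0 /\
    ex_derive_n (fun t => f (padd p t (Jmul v))) 2 0 /\
    levi f p v > 0.

Definition ex_dir (j : nat) : pt := (fun k => if Nat.eqb k j then 1 else 0, fun _ => 0).
Definition ey_dir (j : nat) : pt := (fun _ => 0, fun k => if Nat.eqb k j then 1 else 0).

Definition critical_point (n : nat) (f : pt -> R) (p : pt) : Prop :=
  forall j, (1 <= j <= n)%nat ->
    is_derive (fun t => f (padd p t (ex_dir j))) 0 0 /\
    is_derive (fun t => f (padd p t (ey_dir j))) 0 0.

(* Main.v *)
Require Import Defs.
From Stdlib Require Import Reals Lra Psatz Lia Arith.
From Coquelicot Require Import Coquelicot.
Open Scope R_scope.

Ltac toR := match goal with |- ?a = ?b => change (@eq R a b) end.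

Lemma calc (chi: R->R) (Hs: smooth chi) R0 R1 R2 N0 N1 N2 Q0 Q1 Q2 e2 (He: e2 <> 0) :
 let g := fun t => R0 + t*R1 + t^2*R2 + chi ((N0 + t*N1 + t^2*N2)/e2) * (Q0 + t*Q1 + t^2*Q2) in
 is_derive g 0 (R1 + Derive chi (N0/e2) * (N1/e2) * Q0 + chi (N0/e2) * Q1) /\
 ex_derive_n g 2 0 /\
 Derive_n g 2 0 = 2*R2 + Derive (Derive chi) (N0/e2) * (N1/e2)^2 * Q0 + Derive chi (N0/e2) * (2*N2/e2) * Q0 + 2 * Derive chi (N0/e2) * (N1/e2) * Q1 + chi (N0/e2) * (2*Q2).
Proof.
  intro g.
  assert (H1 : forall t, ex_derive chi t) by (intro t; exact (Hs 1%nat t)).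
  assert (H2 : forall t, ex_derive (Derive chi) t) by (intro t; exact (Hs 2%nat t)).
  set (g' := fun t => R1 + 2*t*R2 + Derive chi ((N0 + t*N1 + t^2*N2)/e2) * ((N1 + 2*t*N2)/e2) * (Q0 + t*Q1 + t^2*Q2) + chi ((N0 + t*N1 + t^2*N2)/e2) * (Q1 + 2*t*Q2)).
  assert (Dg : forall t, is_derive g t (g' t)).
  { intro t. unfold g, g'. auto_derive. apply H1. change (fun x => chi x) with chi. unfold Rdiv. replace (t*(t*1)) with (t^2) by ring. ring. }
  assert (Eg : forall t, Derive g t = g' t) by (intro t; apply is_derive_unique, Dg).
  assert (Dg' : is_derive g' 0 (2*R2 + Derive (Derive chi) (N0/e2) * (N1/e2)^2 * Q0 + Derive chi (N0/e2) * (2*N2/e2) * Q0 + 2 * Derive chi (N0/e2) * (N1/e2) * Q1 + chi (N0/e2) * (2*Q2))).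
  { unfold g'. auto_derive. repeat split; try apply H1; try apply H2. change (fun x => chi x) with chi. change (fun x => Derive chi x) with (Derive chi). replace ((N0 + 0 * N1 + 0 * (0 * 1) * N2) * / e2) with (N0/e2) by (unfold Rdiv; ring). unfold Rdiv. ring. }
  split; [|split].
  - replace (R1 + Derive chi (N0/e2) * (N1/e2) * Q0 + chi (N0/e2) * Q1) with (g' 0). apply Dg.
    unfold g'. replace ((N0 + 0 * N1 + 0 ^ 2 * N2) / e2) with (N0/e2) by (unfold Rdiv; ring). unfold Rdiv; ring.
  - simpl. apply ex_derive_ext with g'. intro t; symmetry; apply Eg. exists (2*R2 + Derive (Derive chi) (N0/e2) * (N1/e2)^2 * Q0 + Derive chi (N0/e2) * (2*N2/e2) * Q0 + 2 * Derive chi (N0/e2) * (N1/e2) * Q1 + chi (N0/e2) * (2*Q2)). exact Dg'.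
  - simpl. rewrite (Derive_ext _ _ _ Eg). apply is_derive_unique, Dg'.
Qed.

Lemma sum_add (f g : nat -> R) lo hi :
  sum_n_m (fun j => f j + g j) lo hi = sum_n_m f lo hi + sum_n_m g lo hi.
Proof. apply (sum_n_m_plus f g). Qed.

Lemma sum_scal (c : R) (f : nat -> R) lo hi :
  sum_n_m (fun j => c * f j) lo hi = c * sum_n_m f lo hi.
Proof. apply (sum_n_m_mult_l c f). Qed.

Lemma sum_zero lo hi : sum_n_m (fun _ => 0) lo hi = 0.
Proof. apply (sum_n_m_const_zero (G:=R_AbelianMonoid)). Qed.

Lemma sum_le_loc (f g : nat -> R) lo hi :
  (forall k, (lo <= k <= hi)%nat -> f k <= g k) -> sum_n_m f lo hi <= sum_n_m g lo hi.
Proof.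
  intro H. rewrite (sum_n_m_ext_loc f (fun k => Rmin (f k) (g k))).
  apply sum_n_m_le. intro k. apply Rmin_r.
  intros k Hk. specialize (H k Hk). rewrite Rmin_left; auto.
Qed.

Lemma sum_nonneg (f : nat -> R) lo hi :
  (forall k, (lo <= k <= hi)%nat -> 0 <= f k) -> 0 <= sum_n_m f lo hi.
Proof. intro H. apply Rle_trans with (sum_n_m (fun _ => 0) lo hi).
  rewrite sum_zero; lra. apply sum_le_loc. auto. Qed.

Lemma sum_out (F : nat -> R) j lo hi :
  (j < lo \/ hi < j)%nat -> sum_n_m (fun k => if Nat.eqb k j then F k else 0) lo hi = 0.
Proof.
  intro H. transitivity (sum_n_m (fun _ => 0) lo hi); [|apply sum_zero]. apply sum_n_m_ext_loc.
  intros k Hk. destruct (Nat.eqb_spec k j); [lia|reflexivity].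
Qed.

Lemma sum_split_at (u : nat -> R) lo j hi :
  (1 <= lo <= j)%nat -> (j <= hi)%nat ->
  sum_n_m u lo hi = sum_n_m u lo (pred j) + u j + sum_n_m u (S j) hi.
Proof.
  intros H1 H2. rewrite (sum_n_m_Chasles u lo (pred j) hi) by lia.
  replace (S (pred j)) with j by lia.
  rewrite (sum_Sn_m u j hi) by lia. simpl. unfold plus. simpl. ring.
Qed.

Lemma sum_in (F : nat -> R) j lo hi :
  (1 <= lo <= j)%nat -> (j <= hi)%nat ->
  sum_n_m (fun k => if Nat.eqb k j then F k else 0) lo hi = F j.
Proof.
  intros H1 H2. rewrite (sum_split_at _ lo j hi) by lia.
  rewrite !sum_out by lia. rewrite Nat.eqb_refl. match goal with |- ?a = ?b => change (@eq R a b) end. ring.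
Qed.

Lemma sum_ge_term (u : nat -> R) j lo hi :
  (1 <= lo <= j)%nat -> (j <= hi)%nat -> (forall k, (lo <= k <= hi)%nat -> 0 <= u k) ->
  u j <= sum_n_m u lo hi.
Proof.
  intros H1 H2 H. rewrite (sum_split_at _ lo j hi) by lia.
  assert (0 <= sum_n_m u lo (pred j)) by (apply sum_nonneg; intros; apply H; lia).
  assert (0 <= sum_n_m u (S j) hi) by (apply sum_nonneg; intros; apply H; lia).
  lra.
Qed.

Definition Gs lo hi (c d x y : nat -> R) :=
  sum_n_m (fun j => c j * x j ^ 2 + d j * y j ^ 2) lo hi.
Definition Bs lo hi (c d x a y b : nat -> R) :=
  sum_n_m (fun j => 2 * (c j * x j * a j + d j * y j * b j)) lo hi.

Lemma G_expand lo hi c d x a y b t :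
  Gs lo hi c d (fun j => x j + t * a j) (fun j => y j + t * b j)
  = Gs lo hi c d x y + t * Bs lo hi c d x a y b + t ^ 2 * Gs lo hi c d a b.
Proof.
  unfold Gs, Bs. rewrite <- !sum_scal, <- !sum_add. apply sum_n_m_ext. intro j. match goal with |- ?a = ?b => change (@eq R a b) end. ring.
Qed.

Lemma disc (a b c : R) : 0 <= a -> (forall t, 0 <= c + t * b + t ^ 2 * a) -> b ^ 2 <= 4 * a * c.
Proof.
  intros Ha0 H. destruct (Req_dec a 0) as [Ha|Ha].
  - subst. destruct (Req_dec b 0) as [Hb|Hb]. subst. lra.
    specialize (H (-(c+1)/b)). replace (c + - (c + 1) / b * b + (- (c + 1) / b) ^ 2 * 0) with (-1) in H by (field; auto). lra.
  - assert (Hp : 0 < a) by lra. specialize (H (- b / (2*a))).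
    assert (E: c + - b / (2 * a) * b + (- b / (2 * a)) ^ 2 * a = c - b^2/(4*a)) by (field; lra).
    rewrite E in H. 
    assert (b^2/(4*a) * (4*a) = b^2) by (field; lra).
    assert (b ^ 2 / (4 * a) <= c) by lra. nra.
Qed.

Lemma abs_mul_ge (D M X : R) : Rabs D <= M -> 0 <= X -> - (M * X) <= D * X.
Proof. intros H HX. assert (- Rabs D <= D) by (apply Rle_trans with (-Rabs D); [lra| ]; unfold Rabs; destruct (Rcase_abs D); lra). nra. Qed.

Lemma psi_bound (D1 D2 ch N0 N1 V Q0 Q1 Q2 e2 d0 M1 M2 : R) :
 0 <= N0 -> N0 < e2 -> Rabs D1 <= M1 -> Rabs D2 <= M2 -> 0 <= ch -> 0 <= Q0 -> Q0 <= d0*N0 ->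
 0 <= Q2 -> Q2 <= d0*V -> N1^2 <= 4*V*N0 -> Q1^2 <= 4*Q2*Q0 -> 0 <= d0 -> 0 <= V ->
 -((4*M2+10*M1)*d0*V) <= D2 * (N1/e2)^2 * Q0 + D1*(2*V/e2)*Q0 + 2*D1*(N1/e2)*Q1 + ch*(2*Q2).
Proof.
  intros HN0 HNe H1 H2 Hch HQ0 HQ0' HQ2 HQ2' HN1 HQ1 Hd0 HV.
  assert (He : 0 < e2) by lra.
  assert (HM1 : 0 <= M1) by (apply Rle_trans with (Rabs D1); auto; apply Rabs_pos).
  assert (HM2 : 0 <= M2) by (apply Rle_trans with (Rabs D2); auto; apply Rabs_pos).
  set (r := N0 / e2). assert (Hr : 0 <= r < 1).
  { unfold r. split. unfold Rdiv; apply Rmult_le_pos; [lra|left; apply Rinv_0_lt_compat; lra]. apply Rmult_lt_reg_r with e2; auto.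
    unfold Rdiv. rewrite Rmult_assoc, Rinv_l; lra. }
  assert (EN0 : N0 = r * e2) by (unfold r; field; lra).
  set (u := N1 / e2).
  assert (EN1 : N1 = u * e2) by (unfold u; field; lra).
  rewrite EN1 in HN1. rewrite EN0 in HN1, HQ0'.
  assert (Hu2 : u^2 * e2 <= 4 * V * r) by nra.
  assert (A1 : u^2 * Q0 <= 4 * d0 * V).
  { assert (u^2*Q0*e2 <= 4*V*r*(d0*r*e2)) by nra.
    assert (u^2*Q0 <= 4*V*r*(d0*r)).
    { apply Rmult_le_reg_r with e2; auto. lra. }
    assert (0 <= d0*V) by nra. assert (r*r <= 1) by nra.
    assert (4*V*r*(d0*r) = 4*(d0*V)*(r*r)) by ring. nra. }
  assert (T1 : - (M2 * (u^2*Q0)) <= D2 * u^2 * Q0).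
  { rewrite Rmult_assoc. apply abs_mul_ge; auto. nra. }
  assert (A2 : 2*V/e2*Q0 <= 2*d0*V).
  { replace (2*V/e2*Q0) with (2*V*(Q0/e2)) by (field; lra).
    assert (Q0/e2 <= d0*r). { apply Rmult_le_reg_r with e2; auto. replace (Q0/e2*e2) with Q0 by (field; lra). nra. }
    assert (d0 * r <= d0) by nra. nra. }
  assert (T2 : - (M1 * (2*V/e2*Q0)) <= D1 * (2*V/e2) * Q0).
  { rewrite Rmult_assoc. apply abs_mul_ge; auto. apply Rmult_le_pos; [|lra]. unfold Rdiv. apply Rmult_le_pos. lra. left; apply Rinv_0_lt_compat; lra. }
  assert (A3 : (u*Q1)^2 <= (4*d0*V)^2).
  { assert ((u*Q1)^2 = u^2*Q1^2) by ring.
    assert (u^2*Q1^2*e2 <= 4*V*r*(4*Q2*Q0)) by nra.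
    assert (Q2*Q0 <= (d0*V)*(d0*r*e2)) by (apply Rmult_le_compat; lra).
    assert (0 <= 4*V*r) by nra.
    assert (4*V*r*(4*Q2*Q0) <= 4*V*r*(4*(d0*V)*(d0*r*e2))) by (apply Rmult_le_compat_l; lra).
    assert (u^2*Q1^2 <= 16*(d0*V)^2*(r*r)).
    { apply Rmult_le_reg_r with e2; auto. nra. }
    assert (r*r <= 1) by nra. assert (0 <= (d0*V)^2) by apply pow2_ge_0.
    nra. }
  assert (A3' : Rabs (u*Q1) <= 4*d0*V).
  { apply Rsqr_le_abs_1 in A3 || idtac. 
    rewrite <- (Rabs_pos_eq (4*d0*V)) by nra. apply Rsqr_le_abs_0. unfold Rsqr. nra. }
  assert (T3 : - (2*M1*(4*d0*V)) <= 2*D1*u*Q1).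
  { assert (Rabs (D1*(u*Q1)) <= M1 * (4*d0*V)).
    { rewrite Rabs_mult. apply Rmult_le_compat; auto; apply Rabs_pos. }
    assert (- Rabs (D1*(u*Q1)) <= D1*(u*Q1)) by (unfold Rabs; destruct (Rcase_abs (D1*(u*Q1))); lra).
    nra. }
  assert (T4 : 0 <= ch*(2*Q2)) by nra.
  assert (M2 * (u^2*Q0) <= M2 * (4*d0*V)) by (apply Rmult_le_compat_l; auto).
  assert (M1 * (2*V/e2*Q0) <= M1 * (2*d0*V)) by (apply Rmult_le_compat_l; auto).
  lra.
Qed.

Lemma bound01 (f : R -> R) : (forall t, ex_derive f t) ->
  exists M, 0 <= M /\ forall s, 0 <= s <= 1 -> Rabs (f s) <= M.
Proof.
  intro H. assert (C: forall c, continuity_pt f c).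
  { intro c. apply continuity_pt_filterlim. apply (ex_derive_continuous f c), H. }
  destruct (continuity_ab_maj f 0 1) as [a [Ha _]]; [lra| intros; apply C |].
  destruct (continuity_ab_maj (opp_fct f) 0 1) as [b [Hb _]]; [lra| intros; apply continuity_pt_opp, C|].
  unfold opp_fct in Hb.
  exists (Rabs (f a) + Rabs (f b)). split.
  assert (0 <= Rabs (f a)) by apply Rabs_pos. assert (0 <= Rabs (f b)) by apply Rabs_pos. lra.
  intros s Hs. specialize (Ha s Hs); specialize (Hb s Hs).
  assert (f a <= Rabs (f a)) by apply Rle_abs.
  assert (- f b <= Rabs (f b)) by (rewrite <- Rabs_Ropp; apply Rle_abs).
  assert (0 <= Rabs (f a)) by apply Rabs_pos. assert (0 <= Rabs (f b)) by apply Rabs_pos.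
  apply Rabs_le. lra.
Qed.

Lemma chasles_m (u : nat -> R) m n : (m <= n)%nat ->
  sum_n_m u 1 n = sum_n_m u 1 m + sum_n_m u (m+1) n.
Proof. intro H. rewrite (sum_n_m_Chasles u 1 m n) by lia. rewrite Nat.add_1_r. reflexivity. Qed.

Definition c1 : nat -> R := fun _ => 1.
Definition c0 : nat -> R := fun _ => 0.
Definition negf (f : nat -> R) : nat -> R := fun j => - f j.
Definition RG n m mu x y := Gs 1 m c1 mu x y + Gs (m+1) n c1 (negf mu) x y.
Definition RB n m mu x a y b := Bs 1 m c1 mu x a y b + Bs (m+1) n c1 (negf mu) x a y b.

Lemma f_line n m chi eps mu delta p v t :
 rho n m mu (padd p t v) + psi n m chi eps delta (padd p t v) =
 RG n m mu (fst p) (snd p) + t * RB n m mu (fst p) (fst v) (snd p) (snd v) + t^2 * RG n m mu (fst v) (snd v)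
 + chi ((Gs 1 n c1 c1 (fst p) (snd p) + t * Bs 1 n c1 c1 (fst p) (fst v) (snd p) (snd v) + t^2 * Gs 1 n c1 c1 (fst v) (snd v)) / eps^2)
 * (Gs (m+1) n c0 delta (fst p) (snd p) + t * Bs (m+1) n c0 delta (fst p) (fst v) (snd p) (snd v) + t^2 * Gs (m+1) n c0 delta (fst v) (snd v)).
Proof.
  set (X := fun j => fst p j + t * fst v j). set (Y := fun j => snd p j + t * snd v j).
  assert (E1 : rho n m mu (padd p t v) = RG n m mu X Y).
  { unfold rho, RG, Gs. f_equal; apply sum_n_m_ext; intro j; unfold X, Y, c1, negf, padd; simpl; toR; ring. }
  assert (E2 : normsq n (padd p t v) = Gs 1 n c1 c1 X Y).
  { unfold normsq, Gs. apply sum_n_m_ext; intro j; unfold X, Y, c1, padd; simpl; toR; ring. }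
  assert (E3 : sum_n_m (fun j => delta j * snd (padd p t v) j ^ 2) (m + 1) n = Gs (m+1) n c0 delta X Y).
  { unfold Gs. apply sum_n_m_ext; intro j; unfold X, Y, c0, padd; simpl; toR; ring. }
  unfold psi. rewrite E1, E2, E3. unfold X, Y, RG, RB. rewrite !G_expand. ring.
Qed.

Lemma Gs_nonneg lo hi c d x y : (forall k, (lo <= k <= hi)%nat -> 0 <= c k /\ 0 <= d k) ->
  0 <= Gs lo hi c d x y.
Proof.
  intro H. unfold Gs. apply sum_nonneg. intros k Hk. destruct (H k Hk).
  assert (0 <= x k ^ 2) by apply pow2_ge_0. assert (0 <= y k ^ 2) by apply pow2_ge_0. nra.
Qed.

Lemma Bs_sq lo hi c d x a y b : (forall k, (lo <= k <= hi)%nat -> 0 <= c k /\ 0 <= d k) ->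
  (Bs lo hi c d x a y b)^2 <= 4 * Gs lo hi c d a b * Gs lo hi c d x y.
Proof.
  intro H. apply disc. apply Gs_nonneg; auto.
  intro t. rewrite <- G_expand. apply Gs_nonneg; auto.
Qed.

Lemma Q_le n m delta d0 x y : (m <= n)%nat -> 0 <= d0 ->
  (forall k, (m+1 <= k <= n)%nat -> 0 <= delta k <= d0) ->
  Gs (m+1) n c0 delta x y <= d0 * Gs 1 n c1 c1 x y.
Proof.
  intros Hmn Hd0 H. unfold Gs at 2. rewrite (chasles_m _ m n Hmn). fold (Gs 1 m c1 c1 x y). fold (Gs (m+1) n c1 c1 x y).
  assert (0 <= Gs 1 m c1 c1 x y) by (apply Gs_nonneg; unfold c1; intros; lra).
  assert (Gs (m+1) n c0 delta x y <= d0 * Gs (m+1) n c1 c1 x y).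
  { unfold Gs. rewrite <- sum_scal. apply sum_le_loc. intros k Hk. destruct (H k Hk). unfold c0, c1.
    assert (0 <= x k ^ 2) by apply pow2_ge_0. assert (0 <= y k ^ 2) by apply pow2_ge_0. nra. }
  nra.
Qed.

Lemma RG_sum n m mu mu0 a b : (m <= n)%nat ->
  (forall k, (1 <= k <= m)%nat -> 0 <= mu k) -> (forall k, (m+1 <= k <= n)%nat -> mu k <= mu0) ->
  0 <= mu0 ->
  (1 - mu0) * Gs 1 n c1 c1 a b <= RG n m mu a b + RG n m mu (fun j => - b j) a.
Proof.
  intros Hmn H1 H2 H0. unfold Gs at 1. rewrite (chasles_m _ m n Hmn). fold (Gs 1 m c1 c1 a b). fold (Gs (m+1) n c1 c1 a b).
  unfold RG.
  assert ((1 - mu0) * Gs 1 m c1 c1 a b <= Gs 1 m c1 mu a b + Gs 1 m c1 mu (fun j => - b j) a).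
  { unfold Gs. rewrite <- sum_scal, <- sum_add. apply sum_le_loc. intros k Hk. specialize (H1 k Hk). unfold c1.
    assert (0 <= a k ^ 2) by apply pow2_ge_0. assert (0 <= b k ^ 2) by apply pow2_ge_0. nra. }
  assert ((1 - mu0) * Gs (m+1) n c1 c1 a b <= Gs (m+1) n c1 (negf mu) a b + Gs (m+1) n c1 (negf mu) (fun j => - b j) a).
  { unfold Gs. rewrite <- sum_scal, <- sum_add. apply sum_le_loc. intros k Hk. specialize (H2 k Hk). unfold c1, negf.
    assert (0 <= a k ^ 2) by apply pow2_ge_0. assert (0 <= b k ^ 2) by apply pow2_ge_0. nra. }
  lra.
Qed.

Lemma dir_bound n m chi mu eps delta d0 M1 M2 p w :
 (m <= n)%nat -> smooth chi -> (forall t, 0 <= chi t <= 1) ->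
 (forall s, 0 <= s <= 1 -> Rabs (Derive chi s) <= M1) ->
 (forall s, 0 <= s <= 1 -> Rabs (Derive (Derive chi) s) <= M2) ->
 0 < eps -> 0 <= d0 -> (forall k, (m+1 <= k <= n)%nat -> 0 <= delta k <= d0) ->
 ball_n n eps p ->
 ex_derive_n (fun t => rho n m mu (padd p t w) + psi n m chi eps delta (padd p t w)) 2 0 /\
 2 * RG n m mu (fst w) (snd w) - (4*M2+10*M1)*d0*Gs 1 n c1 c1 (fst w) (snd w) <=
   Derive_n (fun t => rho n m mu (padd p t w) + psi n m chi eps delta (padd p t w)) 2 0.
Proof.
  intros Hmn Hs Hchi HM1 HM2 Heps Hd0 Hd Hp.
  assert (He : eps^2 <> 0) by (apply pow_nonzero; lra).
  pose proof (calc chi Hs (RG n m mu (fst p) (snd p)) (RB n m mu (fst p) (fst w) (snd p) (snd w)) (RG n m mu (fst w) (snd w))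
     (Gs 1 n c1 c1 (fst p) (snd p)) (Bs 1 n c1 c1 (fst p) (fst w) (snd p) (snd w)) (Gs 1 n c1 c1 (fst w) (snd w))
     (Gs (m+1) n c0 delta (fst p) (snd p)) (Bs (m+1) n c0 delta (fst p) (fst w) (snd p) (snd w)) (Gs (m+1) n c0 delta (fst w) (snd w))
     (eps^2) He) as HC.
  cbv zeta in HC. destruct HC as [_ [Hex HD]].
  split.
  - eapply ex_derive_n_ext; [|exact Hex]. intro t. symmetry. apply f_line.
  - rewrite (Derive_n_ext _ _ 2 0 (fun t => f_line n m chi eps mu delta p w t)).
    rewrite HD.
    set (N0 := Gs 1 n c1 c1 (fst p) (snd p)).
    set (N1 := Bs 1 n c1 c1 (fst p) (fst w) (snd p) (snd w)).
    set (V := Gs 1 n c1 c1 (fst w) (snd w)).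
    set (Q0 := Gs (m+1) n c0 delta (fst p) (snd p)).
    set (Q1 := Bs (m+1) n c0 delta (fst p) (fst w) (snd p) (snd w)).
    set (Q2 := Gs (m+1) n c0 delta (fst w) (snd w)).
    assert (Hpos1 : forall k, (1 <= k <= n)%nat -> 0 <= c1 k /\ 0 <= c1 k) by (unfold c1; intros; lra).
    assert (Hpos2 : forall k, (m+1 <= k <= n)%nat -> 0 <= c0 k /\ 0 <= delta k) by (unfold c0; intros k Hk; specialize (Hd k Hk); lra).
    assert (HN0 : 0 <= N0) by (apply Gs_nonneg; auto).
    assert (HN0e : N0 < eps^2).
    { replace N0 with (normsq n p). exact Hp. unfold normsq, N0, Gs. apply sum_n_m_ext; intro j; unfold c1; toR; ring. }
    assert (Hs01 : 0 <= N0 / eps^2 <= 1).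
    { split. unfold Rdiv; apply Rmult_le_pos; [lra|left; apply Rinv_0_lt_compat; apply pow_lt; lra].
      apply Rmult_le_reg_r with (eps^2). apply pow_lt; lra. unfold Rdiv. rewrite Rmult_assoc, Rinv_l by exact He. lra. }
    assert (HV : 0 <= V) by (apply Gs_nonneg; auto).
    assert (HQ0 : 0 <= Q0) by (apply Gs_nonneg; auto).
    assert (HQ2 : 0 <= Q2) by (apply Gs_nonneg; auto).
    assert (HQ0' : Q0 <= d0 * N0) by (apply Q_le; auto).
    assert (HQ2' : Q2 <= d0 * V) by (apply Q_le; auto).
    assert (HN1 : N1^2 <= 4 * V * N0) by (apply Bs_sq; auto).
    assert (HQ1 : Q1^2 <= 4 * Q2 * Q0) by (apply Bs_sq; auto).
    pose proof (psi_bound (Derive chi (N0/eps^2)) (Derive (Derive chi) (N0/eps^2)) (chi (N0/eps^2)) N0 N1 V Q0 Q1 Q2 (eps^2) d0 M1 M2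
      HN0 HN0e (HM1 _ Hs01) (HM2 _ Hs01) (proj1 (Hchi _)) HQ0 HQ0' HQ2 HQ2' HN1 HQ1 Hd0 HV).
    lra.
Qed.

Lemma deriv_zero n m chi mu eps delta p w : smooth chi -> 0 < eps ->
 is_derive (fun t => rho n m mu (padd p t w) + psi n m chi eps delta (padd p t w)) 0 0 ->
 RB n m mu (fst p) (fst w) (snd p) (snd w)
 + Derive chi (Gs 1 n c1 c1 (fst p) (snd p) / eps^2) * (Bs 1 n c1 c1 (fst p) (fst w) (snd p) (snd w) / eps^2) * Gs (m+1) n c0 delta (fst p) (snd p)
 + chi (Gs 1 n c1 c1 (fst p) (snd p) / eps^2) * Bs (m+1) n c0 delta (fst p) (fst w) (snd p) (snd w) = 0.
Proof.
  intros Hs Heps Hc.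
  assert (He : eps^2 <> 0) by (apply pow_nonzero; lra).
  pose proof (calc chi Hs (RG n m mu (fst p) (snd p)) (RB n m mu (fst p) (fst w) (snd p) (snd w)) (RG n m mu (fst w) (snd w))
     (Gs 1 n c1 c1 (fst p) (snd p)) (Bs 1 n c1 c1 (fst p) (fst w) (snd p) (snd w)) (Gs 1 n c1 c1 (fst w) (snd w))
     (Gs (m+1) n c0 delta (fst p) (snd p)) (Bs (m+1) n c0 delta (fst p) (fst w) (snd p) (snd w)) (Gs (m+1) n c0 delta (fst w) (snd w))
     (eps^2) He) as HC.
  cbv zeta in HC. destruct HC as [Hd _].
  pose proof (is_derive_ext _ _ 0 _ (fun t => eq_sym (f_line n m chi eps mu delta p w t)) Hd) as H2.
  apply is_derive_unique in H2. apply is_derive_unique in Hc.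
  rewrite <- H2. exact Hc.
Qed.

Definition ind j : nat -> R := fun k => if Nat.eqb k j then 1 else 0.

Lemma Bs_x0 lo hi d x a y :
  Bs lo hi c0 d x a y (fun _ => 0) = 0.
Proof. unfold Bs. transitivity (sum_n_m (fun _ => 0) lo hi); [|apply sum_zero]. apply sum_n_m_ext. intro k. unfold c0. toR. ring. Qed.

Lemma Bs_ex lo hi c d x y j :
  Bs lo hi c d x (ind j) y (fun _ => 0) = sum_n_m (fun k => if Nat.eqb k j then 2 * c k * x k else 0) lo hi.
Proof. unfold Bs, ind. apply sum_n_m_ext. intro k. destruct (Nat.eqb k j); toR; ring. Qed.

Lemma Bs_ey lo hi c d x y j :
  Bs lo hi c d x (fun _ => 0) y (ind j) = sum_n_m (fun k => if Nat.eqb k j then 2 * d k * y k else 0) lo hi.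
Proof. unfold Bs, ind. apply sum_n_m_ext. intro k. destruct (Nat.eqb k j); toR; ring. Qed.

Lemma crit_part n m chi mu mu' eps delta d0 M1 p :
 (m <= n)%nat -> smooth chi -> (forall t, 0 <= chi t <= 1) ->
 (forall s, 0 <= s <= 1 -> Rabs (Derive chi s) <= M1) ->
 0 < eps -> 0 <= d0 -> M1 * d0 < 1 -> M1 * d0 < mu' ->
 (forall k, (1 <= k <= m)%nat -> mu' <= mu k) ->
 (forall k, (m+1 <= k <= n)%nat -> 0 < delta k <= mu k /\ delta k <= d0) ->
 ball_n n eps p ->
 critical_point n (fun p => rho n m mu p + psi n m chi eps delta p) p ->
 rho n m mu p + psi n m chi eps delta p <= 0.
Proof.
  intros Hmn Hs Hchi HM1 Heps Hd0 Hm1 Hm2 Hmu Hd Hp Hc.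
  assert (He : eps^2 <> 0) by (apply pow_nonzero; lra).
  assert (He' : 0 < eps^2) by (apply pow_lt; lra).
  set (N0 := Gs 1 n c1 c1 (fst p) (snd p)).
  set (Q0 := Gs (m+1) n c0 delta (fst p) (snd p)).
  assert (Hpos1 : forall k, (1 <= k <= n)%nat -> 0 <= c1 k /\ 0 <= c1 k) by (unfold c1; intros; lra).
  assert (Hpos2 : forall k, (m+1 <= k <= n)%nat -> 0 <= c0 k /\ 0 <= delta k) by (unfold c0; intros k Hk; specialize (Hd k Hk); lra).
  assert (HN0 : 0 <= N0) by (apply Gs_nonneg; auto).
  assert (HN0e : N0 < eps^2).
  { replace N0 with (normsq n p). exact Hp. unfold normsq, N0, Gs. apply sum_n_m_ext; intro j; unfold c1; toR; ring. }
  assert (Hs01 : 0 <= N0 / eps^2 <= 1).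
  { split. unfold Rdiv; apply Rmult_le_pos; [lra|left; apply Rinv_0_lt_compat; lra].
    apply Rmult_le_reg_r with (eps^2). lra. unfold Rdiv. rewrite Rmult_assoc, Rinv_l by exact He. lra. }
  assert (HQ0 : 0 <= Q0) by (apply Gs_nonneg; auto).
  assert (HQ0' : Q0 <= d0 * N0) by (apply Q_le; auto; intros k Hk; specialize (Hd k Hk); lra).
  set (D1 := Derive chi (N0 / eps^2)).
  set (c := D1 * (Q0 / eps^2)).
  assert (Hc1 : Rabs c <= M1 * d0).
  { unfold c. rewrite Rabs_mult. apply Rmult_le_compat. apply Rabs_pos. apply Rabs_pos. apply HM1; auto.
    rewrite Rabs_pos_eq. apply Rmult_le_reg_r with (eps^2). lra. unfold Rdiv. rewrite Rmult_assoc, Rinv_l by exact He.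
    nra. unfold Rdiv; apply Rmult_le_pos; [lra|left; apply Rinv_0_lt_compat; lra]. }
  assert (Hc2 : - Rabs c <= c) by (rewrite <- Rabs_Ropp; apply Rle_trans with (- - c); [apply Ropp_le_contravar, Rle_abs| lra]).
  assert (HX : forall j, (1 <= j <= n)%nat -> fst p j = 0).
  { intros j Hj. destruct (Hc j Hj) as [Hx _].
    pose proof (deriv_zero n m chi mu eps delta p (ex_dir j) Hs Heps Hx) as E.
    change (fst (ex_dir j)) with (ind j) in E. change (snd (ex_dir j)) with (fun _ : nat => 0) in E.
    rewrite Bs_x0 in E.
    unfold RB in E. rewrite !Bs_ex in E.
    rewrite (sum_in _ j 1 n) in E by lia.
    destruct (le_lt_dec j m).
    - rewrite (sum_in _ j 1 m) in E by lia. rewrite (sum_out _ j (m+1) n) in E by lia.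
      fold N0 in E. fold Q0 in E. fold D1 in E. unfold c1 in E.
      assert (2 * fst p j * (1 + c) = 0) by (rewrite <- E; unfold c; field; lra).
      apply Rmult_integral in H. destruct H. lra. lra.
    - rewrite (sum_out _ j 1 m) in E by lia. rewrite (sum_in _ j (m+1) n) in E by lia.
      fold N0 in E. fold Q0 in E. fold D1 in E. unfold c1 in E.
      assert (2 * fst p j * (1 + c) = 0) by (rewrite <- E; unfold c; field; lra).
      apply Rmult_integral in H. destruct H. lra. lra. }
  assert (HY : forall j, (1 <= j <= m)%nat -> snd p j = 0).
  { intros j Hj. destruct (Hc j ltac:(lia)) as [_ Hy].
    pose proof (deriv_zero n m chi mu eps delta p (ey_dir j) Hs Heps Hy) as E.
    change (snd (ey_dir j)) with (ind j) in E. change (fst (ey_dir j)) with (fun _ : nat => 0) in E.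
    unfold RB in E. rewrite !Bs_ey in E.
    rewrite (sum_in _ j 1 n) in E by lia.
    rewrite (sum_in _ j 1 m) in E by lia. rewrite !(sum_out _ j (m+1) n) in E by lia.
    fold N0 in E. fold Q0 in E. fold D1 in E. unfold c1 in E.
    assert (2 * snd p j * (mu j + c) = 0) by (rewrite <- E; unfold c; field; lra).
    specialize (Hmu j Hj).
    apply Rmult_integral in H. destruct H. lra. lra. }
  unfold rho, psi.
  set (Q := sum_n_m (fun j => delta j * snd p j ^ 2) (m + 1) n).
  assert (S1 : sum_n_m (fun j => fst p j ^ 2 + mu j * snd p j ^ 2) 1 m = 0).
  { transitivity (sum_n_m (fun _ => 0) 1 m); [|apply sum_zero]. apply sum_n_m_ext_loc. intros k Hk.
    rewrite (HX k) by lia. rewrite (HY k) by lia. toR. ring. }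
  assert (S2 : sum_n_m (fun j => fst p j ^ 2 - mu j * snd p j ^ 2) (m + 1) n <= -1 * Q).
  { unfold Q. rewrite <- sum_scal. apply sum_le_loc. intros k Hk. rewrite (HX k) by lia.
    destruct (Hd k Hk) as [[H1 H2] _]. assert (0 <= snd p k ^ 2) by apply pow2_ge_0. nra. }
  assert (HQ : 0 <= Q).
  { unfold Q. apply sum_nonneg. intros k Hk. destruct (Hd k Hk) as [[H1 H2] _]. assert (0 <= snd p k ^ 2) by apply pow2_ge_0. nra. }
  destruct (Hchi (normsq n p / eps ^ 2)).
  rewrite S1. nra.
Qed.

Theorem lemma6p2 (n m : nat) (chi : R -> R) (mu mu' : R) :
  (1 <= n)%nat -> (m <= n)%nat ->
  smooth chi -> (forall t, 0 <= chi t <= 1) ->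
  (forall t, -1/2 <= t <= 1/2 -> chi t = 1) -> supp_in_m1_1 chi ->
  0 < mu < 1 -> 0 < mu' ->
  exists delta0 : R, 0 < delta0 < 1 /\
    forall (eps : R) (muj delta : nat -> R),
      0 < eps < 1 ->
      (forall j, (1 <= j <= m)%nat -> mu' <= muj j <= 1) ->
      (forall j, (m + 1 <= j <= n)%nat -> 0 <= muj j <= mu) ->
      (forall j, (m + 1 <= j <= n)%nat -> 0 < delta j <= muj j /\ delta j < delta0) ->
      strictly_psh_on n (ball_n n eps)
        (fun p => rho n m muj p + psi n m chi eps delta p) /\
      (forall p, ball_n n eps p ->
         critical_point n (fun p => rho n m muj p + psi n m chi eps delta p) p ->
         rho n m muj p + psi n m chi eps delta p <= 0).
Proof.
  intros Hn Hmn Hs Hchi H12 Hsupp Hmu Hmu'.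
  destruct (bound01 (Derive chi) (fun t => Hs 2%nat t)) as [M1 [HM1p HM1]].
  destruct (bound01 (Derive (Derive chi)) (fun t => Hs 3%nat t)) as [M2 [HM2p HM2]].
  set (K := 4*M2+10*M1).
  assert (HK : 0 <= K) by (unfold K; lra).
  set (r := Rmin (Rmin 1 ((1-mu)/(K+1))) (Rmin (mu'/(M1+1)) (1/(M1+1)))).
  assert (Hr0 : 0 < r).
  { unfold r. repeat apply Rmin_glb_lt; try lra; unfold Rdiv; apply Rmult_lt_0_compat; try lra; apply Rinv_0_lt_compat; lra. }
  assert (Hr1 : r <= 1) by (unfold r; apply Rle_trans with (Rmin 1 ((1-mu)/(K+1))); [apply Rmin_l|apply Rmin_l]).
  assert (Hr2 : r * (K+1) <= 1 - mu).
  { assert (r <= (1-mu)/(K+1)) by (unfold r; apply Rle_trans with (Rmin 1 ((1-mu)/(K+1))); [apply Rmin_l|apply Rmin_r]).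
    apply Rmult_le_compat_r with (r:=K+1) in H; [|lra]. replace ((1-mu)/(K+1)*(K+1)) with (1-mu) in H by (field; lra). exact H. }
  assert (Hr3 : r * (M1+1) <= mu').
  { assert (r <= mu'/(M1+1)) by (unfold r; apply Rle_trans with (Rmin (mu'/(M1+1)) (1/(M1+1))); [apply Rmin_r|apply Rmin_l]).
    apply Rmult_le_compat_r with (r:=M1+1) in H; [|lra]. replace (mu'/(M1+1)*(M1+1)) with mu' in H by (field; lra). exact H. }
  assert (Hr4 : r * (M1+1) <= 1).
  { assert (r <= 1/(M1+1)) by (unfold r; apply Rle_trans with (Rmin (mu'/(M1+1)) (1/(M1+1))); [apply Rmin_r|apply Rmin_r]).
    apply Rmult_le_compat_r with (r:=M1+1) in H; [|lra]. replace (1/(M1+1)*(M1+1)) with 1 in H by (field; lra). exact H. }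
  set (d0 := r / 2).
  assert (Hd0 : 0 < d0 < 1) by (unfold d0; lra).
  assert (HKd : K * d0 < 1 - mu) by (unfold d0; nra).
  assert (HM1d : M1 * d0 < 1) by (unfold d0; nra).
  assert (HM1d' : M1 * d0 < mu') by (unfold d0; nra).
  exists d0. split; [exact Hd0|].
  intros eps muj delta Heps Hmj1 Hmj2 Hdj.
  assert (Hd : forall k, (m+1 <= k <= n)%nat -> 0 <= delta k <= d0) by (intros k Hk; destruct (Hdj k Hk); lra).
  split.
  - intros p Hp v Hsup Hnz.
    destruct (dir_bound n m chi muj eps delta d0 M1 M2 p v Hmn Hs Hchi HM1 HM2 ltac:(lra) ltac:(lra) Hd Hp) as [Ex1 B1].
    destruct (dir_bound n m chi muj eps delta d0 M1 M2 p (Jmul v) Hmn Hs Hchi HM1 HM2 ltac:(lra) ltac:(lra) Hd Hp) as [Ex2 B2].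
    split; [exact Ex1|split; [exact Ex2|]].
    unfold levi, d2dir. cbv beta.
    set (V := Gs 1 n c1 c1 (fst v) (snd v)).
    assert (HVJ : Gs 1 n c1 c1 (fst (Jmul v)) (snd (Jmul v)) = V).
    { unfold V, Gs. apply sum_n_m_ext. intro k. unfold c1, Jmul. simpl. toR. ring. }
    rewrite HVJ in B2. fold V in B1.
    assert (HV : 0 < V).
    { destruct Hnz as [j [Hj Hne]]. apply Rlt_le_trans with (c1 j * fst v j ^ 2 + c1 j * snd v j ^ 2).
      unfold c1. destruct Hne.
      assert (0 < fst v j ^ 2) by (rewrite <- Rsqr_pow2; apply Rsqr_pos_lt; auto). assert (0 <= snd v j ^ 2) by apply pow2_ge_0. lra.
      assert (0 < snd v j ^ 2) by (rewrite <- Rsqr_pow2; apply Rsqr_pos_lt; auto). assert (0 <= fst v j ^ 2) by apply pow2_ge_0. lra.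
      unfold V, Gs. apply (sum_ge_term (fun k => c1 k * fst v k ^ 2 + c1 k * snd v k ^ 2) j 1 n); try lia.
      intros k Hk. unfold c1. assert (0 <= fst v k ^ 2) by apply pow2_ge_0. assert (0 <= snd v k ^ 2) by apply pow2_ge_0. lra. }
    assert (HRG : (1 - mu) * V <= RG n m muj (fst v) (snd v) + RG n m muj (fun j => - snd v j) (fst v)).
    { apply RG_sum; auto. intros k Hk; destruct (Hmj1 k Hk); lra. intros k Hk; destruct (Hmj2 k Hk); lra. lra. }
    change (fst (Jmul v)) with (fun j => - snd v j) in B2. change (snd (Jmul v)) with (fst v) in B2.
    fold K in B1, B2.
    assert (K * d0 * V < (1 - mu) * V) by nra.
    lra.
  - intros p Hp Hc. apply (crit_part n m chi muj mu' eps delta d0 M1 p); auto; try lra.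
    intros k Hk; destruct (Hmj1 k Hk); lra.
    intros k Hk; destruct (Hdj k Hk); lra.
Qed.
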